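(* Suppose the standing assumptions (1)–(5) below hold, and that $m$ nodes, possibly lying in different training graphs, request entire node removal at the same time, where $m<\min_i g_i$. That is, the updated dataset is $\mathcal{D}'=(\mathbf{Z}',\mathbf{y})$ where for each affected graph $\mathcal{G}_i$, $\mathbf{z}_i'=\Phi(\mathbf{S}_i',\mathbf{x}_i')$ with $\mathbf{x}_i'$ obtained from $\mathbf{x}_i$ by zeroing the entries of the removed nodes of $\mathcal{G}_i$ and $\mathbf{S}_i'$ obtained from $\mathbf{S}_i$ by zeroing the rows and columns of those nodes, and $\mathbf{z}_i'=\mathbf{z}_i$ for unaffected graphs. Then the updated model $\mathbf{w}'=\mathbf{w}^\star+\mathbf{H}_{\mathbf{w}^\star}^{-1}\Delta$ satisfies $$\|\nabla L(\mathbf{w}',\mathcal{D}')\|\leq\frac{4\gamma_2 m^2C_1^2F^3}{\lambda^2 n},\qquad F=\sqrt{\sum_{l=0}^{L-1}B^{2l}},$$ where $B$ is the upper frame constant of the graph wavelets used in the GST.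
   Context: Setting (graph classification). There are $n$ training graphs $\mathcal{G}_1,\dots,\mathcal{G}_n$. Graph $\mathcal{G}_i$ has $g_i$ nodes, a symmetric adjacency matrix $\mathbf{S}_i\in\mathbb{R}^{g_i\times g_i}$ (the graph shift operator), a node signal $\mathbf{x}_i\in\mathbb{R}^{g_i}$ (one scalar feature per node) and a label $y_i$. Graph scattering transform (GST). Fix positive integers $J,L$ and wavelet kernel functions $h_1,\dots,h_J:\mathbb{R}\to\mathbb{R}$. For a symmetric $\mathbf{S}=\mathbf{V}\mathbf{\Lambda}\mathbf{V}^T$ with eigenvalues $\lambda_1,\dots,\lambda_g$, set $\mathbf{H}_j(\mathbf{S})=\mathbf{V}\,\mathrm{diag}(h_j(\lambda_1),\dots,h_j(\lambda_g))\mathbf{V}^T$. The wavelets form a frame: there are constants $0<A\le B$ with $A^2\|\mathbf{x}\|^2\le\sum_{j=1}^J\|\mathbf{H}_j(\mathbf{S})\mathbf{x}\|^2\le B^2\|\mathbf{x}\|^2$ for all $\mathbf{x}$ (for all shift operators considered). Let $\rho$ be the entrywise absolute value. For a path $p=(j_1,\dots,j_l)$ with $j_k\in\{1,\dots,J\}$ and $0\le l\le L-1$, define $\Phi_{()}(\mathbf{S},\mathbf{x})=\mathbf{x}$ and $\Phi_{(j_1,\dots,j_l)}(\mathbf{S},\mathbf{x})=\rho\big(\mathbf{H}_{j_l}(\mathbf{S})\Phi_{(j_1,\dots,j_{l-1})}(\mathbf{S},\mathbf{x})\big)$, and the scalar coefficient $\phi_p(\mathbf{S},\mathbf{x})=U\Phi_p(\mathbf{S},\mathbf{x})$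 with the averaging operator $U=\frac{1}{g}\mathbf{1}^T$ ($g$ the number of nodes). The embedding $\Phi(\mathbf{S},\mathbf{x})\in\mathbb{R}^d$, $d=\sum_{l=0}^{L-1}J^l$, is the concatenation of all $\phi_p(\mathbf{S},\mathbf{x})$. Set $\mathbf{z}_i=\Phi(\mathbf{S}_i,\mathbf{x}_i)$, let $\mathbf{Z}$ have rows $\mathbf{z}_i^T$, and $\mathcal{D}=(\mathbf{Z},\mathbf{y})$. Learning and update. $\ell(s,y)$ is convex and twice differentiable in $s$; $\ell'$, $\ell''$ denote derivatives in $s$, and $\nabla$, $\nabla^2$ denote gradient/Hessian in $\mathbf{w}$. For a dataset $\mathcal{D}=(\mathbf{Z},\mathbf{y})$, $L(\mathbf{w},\mathcal{D})=\sum_{i=1}^n\big(\ell(\mathbf{w}^T\mathbf{z}_i,y_i)+\frac{\lambda}{2}\|\mathbf{w}\|^2\big)$ with $\lambda>0$, and $\mathbf{w}^\star=\arg\min_{\mathbf{w}}L(\mathbf{w},\mathcal{D})$. For the updated dataset $\mathcal{D}'$, set $\mathbf{H}_{\mathbf{w}^\star}=\nabla^2L(\mathbf{w}^\star,\mathcal{D}')$ and $\Delta=\nabla L(\mathbf{w}^\star,\mathcal{D})-\nabla L(\mathbf{w}^\star,\mathcal{D}')$. Norms are $\ell_2$ for vectors and operator norm for matrices. Standing assumptions: there are constants $C_1,C_2,\gamma_1,\gamma_2$ such that for every embedding $\mathbf{z}_i$ (of $\mathcal{D}$ or $\mathcal{D}'$) and every $\mathbf{w}\in\mathbb{R}^d$: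 (1) $\|\nabla\ell(\mathbf{w}^T\mathbf{z}_i,y_i)\|\le C_1$; (2) $|\ell'(\mathbf{w}^T\mathbf{z}_i,y_i)|\le C_2$; (3) $\ell'$ is $\gamma_1$-Lipschitz; (4) $\ell''$ is $\gamma_2$-Lipschitz; (5) the signals satisfy $|[\mathbf{x}_i]_j|\le1$ for all $i$ and all $j\in\{1,\dots,g_i\}$. *)

(* Defs.v *)
From HB Require Import structures.
From mathcomp Require Import all_boot all_order all_algebra.
From mathcomp Require Import all_classical all_reals all_analysis.
Set Implicit Arguments. Unset Strict Implicit. Unset Printing Implicit Defensive.
Import Order.TTheory GRing.Theory Num.Theory.
Local Open Scope ring_scope.

Section GSTDefs.
Variable R : realType.

Definition vdot d (u v : 'cV[R]_d) : R := \sum_(k < d) u k 0 * v k 0.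
Definition vnorm d (u : 'cV[R]_d) : R := Num.sqrt (vdot u u).

(* Spectral filter h(S) = V diag(h(lambda_1),...,h(lambda_g)) V^T, computed from
   a (classically chosen) orthogonal eigendecomposition S = V diag(lambda) V^T;
   the result does not depend on the chosen decomposition.  Symmetric real
   matrices always have one (spectral theorem); otherwise the value is 0. *)
Definition specdec g (S : 'M[R]_g) (VL : 'M[R]_g * 'rV[R]_g) : Prop :=
  VL.1 *m VL.1^T = 1%:M /\ S = VL.1 *m diag_mx VL.2 *m VL.1^T.

Definition wav (h : R -> R) g (S : 'M[R]_g) : 'M[R]_g :=
  match pselect (exists VL, specdec S VL) with
  | left e => let VL := proj1_sig (cid e) in
              VL.1 *m diag_mx (map_mx h VL.2) *m VL.1^T
  | right _ => 0
  end.

Definition gst_path (L J : nat) := {l : 'I_L & l.-tuple 'I_J}.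
Definition npaths (L J : nat) : nat := #|{: gst_path L J}|.

Definition gst_step J g (h : 'I_J -> R -> R) (S : 'M[R]_g) (v : 'cV[R]_g) (j : 'I_J)
  : 'cV[R]_g := map_mx (fun a => `|a|) (wav (h j) S *m v).

Definition gst_Phi J g (h : 'I_J -> R -> R) (S : 'M[R]_g) (x : 'cV[R]_g)
  (p : seq 'I_J) : 'cV[R]_g := foldl (gst_step h S) x p.

Definition gst_coef J g (h : 'I_J -> R -> R) (S : 'M[R]_g) (x : 'cV[R]_g)
  (p : seq 'I_J) : R := (g%:R)^-1 * \sum_(k < g) gst_Phi h S x p k 0.

(* The GST embedding Phi(S,x) in R^d, d = #paths = sum_{l<L} J^l,
   coordinates indexed by a fixed enumeration of the paths *)
Definition gst (L J : nat) g (h : 'I_J -> R -> R) (S : 'M[R]_g) (x : 'cV[R]_g)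
  : 'cV[R]_(npaths L J) :=
  \col_(k < npaths L J) gst_coef h S x (tagged (@enum_val _ (mem predT) k)).

Definition remove_signal g (Rm : {set 'I_g}) (x : 'cV[R]_g) : 'cV[R]_g :=
  \col_(k < g) (if k \in Rm then 0 else x k 0).
Definition remove_shift g (Rm : {set 'I_g}) (S : 'M[R]_g) : 'M[R]_g :=
  \matrix_(a < g, b < g) (if (a \in Rm) || (b \in Rm) then 0 else S a b).

Definition Lobj (Y : Type) n d (ell : R -> Y -> R) (lam : R)
  (Z : 'I_n -> 'cV[R]_d) (y : 'I_n -> Y) (w : 'cV[R]_d) : R :=
  \sum_(i < n) (ell (vdot w (Z i)) (y i) + lam / 2 * vnorm w ^+ 2).

(* gradient in w (chain rule, ell' = derivative of ell in s) *)
Definition gradL (Y : Type) n d (dl : R -> Y -> R) (lam : R)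
  (Z : 'I_n -> 'cV[R]_d) (y : 'I_n -> Y) (w : 'cV[R]_d) : 'cV[R]_d :=
  \sum_(i < n) (dl (vdot w (Z i)) (y i) *: Z i + lam *: w).

(* Hessian in w (ell'' = second derivative of ell in s) *)
Definition hessL (Y : Type) n d (d2l : R -> Y -> R) (lam : R)
  (Z : 'I_n -> 'cV[R]_d) (y : 'I_n -> Y) (w : 'cV[R]_d) : 'M[R]_d :=
  \sum_(i < n) (d2l (vdot w (Z i)) (y i) *: (Z i *m (Z i)^T) + lam%:M).

End GSTDefs.

(* Main.v *)
Require Import Defs.
From HB Require Import structures.
From mathcomp Require Import all_boot all_order all_algebra.
From mathcomp Require Import all_classical all_reals all_analysis.
From mathcomp Require Import ring lra.
Import Order.TTheory GRing.Theory Num.Theory.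
Local Open Scope ring_scope.

Section Vec.
Set Implicit Arguments. Unset Strict Implicit.
Variable R : realType.
Variable d : nat.
Implicit Types u v w : 'cV[R]_d.

Lemma vdotC u v : vdot u v = vdot v u.
Proof. by apply: eq_bigr => k _; rewrite mulrC. Qed.

Lemma vdotDl u v w : vdot (u + v) w = vdot u w + vdot v w.
Proof. by rewrite /vdot -big_split; apply: eq_bigr => k _; rewrite mxE mulrDl. Qed.

Lemma vdotZl a u w : vdot (a *: u) w = a * vdot u w.
Proof. by rewrite /vdot mulr_sumr; apply: eq_bigr => k _; rewrite mxE mulrA. Qed.

Lemma vdot0l w : vdot 0 w = 0.
Proof. by rewrite /vdot big1 // => k _; rewrite mxE mul0r. Qed.

Lemma vdotNl u w : vdot (- u) w = - vdot u w.
Proof. by rewrite -scaleN1r vdotZl mulN1r. Qed.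

Lemma vdotBl u v w : vdot (u - v) w = vdot u w - vdot v w.
Proof. by rewrite vdotDl vdotNl. Qed.

Lemma vdotDr u v w : vdot w (u + v) = vdot w u + vdot w v.
Proof. by rewrite vdotC vdotDl !(vdotC w). Qed.
Lemma vdotZr a u w : vdot w (a *: u) = a * vdot w u.
Proof. by rewrite vdotC vdotZl vdotC. Qed.
Lemma vdotBr u v w : vdot w (u - v) = vdot w u - vdot w v.
Proof. by rewrite vdotC vdotBl !(vdotC w). Qed.

Lemma vdot_suml n (F : 'I_n -> 'cV[R]_d) w :
  vdot (\sum_(i < n) F i) w = \sum_(i < n) vdot (F i) w.
Proof.
by apply: (big_morph (fun u => vdot u w)); [move=> ??; exact: vdotDl| exact: vdot0l].
Qed.
Lemma vdot_sumr n (F : 'I_n -> 'cV[R]_d) w :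
  vdot w (\sum_(i < n) F i) = \sum_(i < n) vdot w (F i).
Proof. by rewrite vdotC vdot_suml; apply: eq_bigr => i _; rewrite vdotC. Qed.

Lemma vdot_ge0 u : 0 <= vdot u u.
Proof. by apply: sumr_ge0 => k _; rewrite -expr2 sqr_ge0. Qed.

Lemma vdot_eq0 u : vdot u u = 0 -> u = 0.
Proof.
move=> /eqP; rewrite psumr_eq0 => [/allP H|k _]; last by rewrite -expr2 sqr_ge0.
apply/matrixP => k j; rewrite (ord1 j) mxE.
by have /H := mem_index_enum k; rewrite /= -expr2 sqrf_eq0 => /eqP.
Qed.

Lemma vnorm_ge0 u : 0 <= vnorm u.
Proof. exact: sqrtr_ge0. Qed.

Lemma vnorm_sq u : vnorm u ^+ 2 = vdot u u.
Proof. by rewrite sqr_sqrtr // vdot_ge0. Qed.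

Lemma vdot_CS u v : vdot u v ^+ 2 <= vdot u u * vdot v v.
Proof.
have [v0|vn0] := eqVneq (vdot v v) 0.
  by rewrite v0 (@vdot_eq0 v v0) vdotC vdot0l expr0n /= mulr0.
have vp : 0 < vdot v v by rewrite lt_def vn0 vdot_ge0.
set t := vdot u v / vdot v v.
have := vdot_ge0 (u - t *: v).
rewrite !(vdotBl, vdotBr, vdotZl, vdotZr) (vdotC v u) /t.
move=> H; rewrite -subr_ge0.
have -> : vdot u u * vdot v v - vdot u v ^+ 2 =
  vdot v v * (vdot u u - vdot u v / vdot v v * vdot u v -
     vdot u v / vdot v v * (vdot u v - vdot u v / vdot v v * vdot v v)).
  by field; rewrite vn0.
by apply: mulr_ge0 => //; exact: ltW.
Qed.

Lemma vdot_le u v : vdot u v <= vnorm u * vnorm v.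
Proof.
apply: le_trans (ler_norm _) _.
rewrite -sqrtr_sqr /vnorm -sqrtrM ?vdot_ge0 // ler_sqrt ?vdot_CS //.
by apply: mulr_ge0; apply: vdot_ge0.
Qed.

Lemma vnormZ a u : vnorm (a *: u) = `|a| * vnorm u.
Proof. by rewrite /vnorm vdotZl vdotZr mulrA -expr2 sqrtrM ?sqr_ge0 // sqrtr_sqr. Qed.

Lemma vnormD u v : vnorm (u + v) <= vnorm u + vnorm v.
Proof.
rewrite -(ler_pXn2r (_ : (0 < 2)%N)) ?nnegrE ?addr_ge0 ?vnorm_ge0 //.
rewrite vnorm_sq sqrrD !vnorm_sq vdotDl !vdotDr (vdotC v u).
have := vdot_le u v; lra.
Qed.

Lemma vnorm_sum n (F : 'I_n -> 'cV[R]_d) :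
  vnorm (\sum_(i < n) F i) <= \sum_(i < n) vnorm (F i).
Proof.
elim/big_rec2: _ => [|i a b _ IH].
  by rewrite /vnorm vdot0l sqrtr0.
by apply: le_trans (vnormD _ _) _; rewrite lerD2l.
Qed.

Lemma vnorm0 : vnorm (0 : 'cV[R]_d) = 0.
Proof. by rewrite /vnorm vdot0l sqrtr0. Qed.

Lemma vnorm_eq0 u : vnorm u = 0 -> u = 0.
Proof. by move=> H; apply: vdot_eq0; rewrite -vnorm_sq H expr0n. Qed.

End Vec.


Section An.
Set Implicit Arguments. Unset Strict Implicit.
Variable R : realType.

Lemma right_quot_le (f : R -> R) (x df c e : R) : 0 < e -> is_derive x 1 f df ->
  (forall h, 0 < h < e -> h^-1 * (f (h + x) - f x) <= c) -> df <= c.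
Proof.
move=> e0 fd H.
have dfx : derivable f x 1 by case: fd.
rewrite -(@derive_val _ _ _ _ _ _ _ fd) ['D_1 f x]cvg_at_rightE; last exact: dfx.
apply: limr_le.
  rewrite -(cvg_at_rightE (fun h : R => h^-1 *: ((f \o shift x) _ - f x))) //.
  apply: cvg_trans dfx; apply: cvg_app.
  move=> A [r r0 Ar]; exists r => // z zr z0; apply: Ar => //.
  exact/lt0r_neq0.
near=> h.
rewrite /= /GRing.scale /= mulr1; apply: H; apply/andP; split.
  by near: h; exists 1 => /=.
near: h; exists e => //= z; rewrite /ball_ /= sub0r normrN => zl z0.
by rewrite gtr0_norm in zl.
Unshelve. all: by end_near. Qed.

Lemma right_quot_ge (f : R -> R) (x df c e : R) : 0 < e -> is_derive x 1 f df ->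
  (forall h, 0 < h < e -> c <= h^-1 * (f (h + x) - f x)) -> c <= df.
Proof.
move=> e0 fd H.
have dfx : derivable f x 1 by case: fd.
rewrite -(@derive_val _ _ _ _ _ _ _ fd) ['D_1 f x]cvg_at_rightE; last exact: dfx.
apply: limr_ge.
  rewrite -(cvg_at_rightE (fun h : R => h^-1 *: ((f \o shift x) _ - f x))) //.
  apply: cvg_trans dfx; apply: cvg_app.
  move=> A [r r0 Ar]; exists r => // z zr z0; apply: Ar => //.
  exact/lt0r_neq0.
near=> h.
rewrite /= /GRing.scale /= mulr1; apply: H; apply/andP; split.
  by near: h; exists 1 => /=.
near: h; exists e => //= z; rewrite /ball_ /= sub0r normrN => zl z0.
by rewrite gtr0_norm in zl.
Unshelve. all: by end_near. Qed.

Lemma left_quot_ge (f : R -> R) (x df c e : R) : 0 < e -> is_derive x 1 f df ->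
  (forall h, - e < h < 0 -> c <= h^-1 * (f (h + x) - f x)) -> c <= df.
Proof.
move=> e0 fd H.
have dfx : derivable f x 1 by case: fd.
rewrite -(@derive_val _ _ _ _ _ _ _ fd) ['D_1 f x]cvg_at_leftE; last exact: dfx.
apply: limr_ge.
  rewrite -(cvg_at_leftE (fun h : R => h^-1 *: ((f \o shift x) _ - f x))) //.
  apply: cvg_trans dfx; apply: cvg_app.
  move=> A [r r0 Ar]; exists r => // z zr z0; apply: Ar => //.
  exact/ltr0_neq0.
near=> h.
rewrite /= /GRing.scale /= mulr1; apply: H; apply/andP; split; last first.
  by near: h; exists 1 => /=.
near: h; exists e => //= z; rewrite /ball_ /= sub0r normrN => zl z0.
by rewrite ltr0_norm // in zl; rewrite ltrNl.
Unshelve. all: by end_near. Qed.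


Arguments right_quot_le [f x df c e].
Arguments right_quot_ge [f x df c e].
Arguments left_quot_ge [f x df c e].

Lemma conv_mono (f df : R -> R) :
  (forall a b t, 0 <= t <= 1 -> f (t * a + (1 - t) * b) <= t * f a + (1 - t) * f b) ->
  (forall s : R, is_derive s 1 f (df s)) ->
  forall a b, a < b -> df a <= df b.
Proof.
move=> cvx fd a b ab.
have ba : 0 < b - a by rewrite subr_gt0.
set q := (f b - f a) / (b - a).
apply: (@le_trans _ _ q).
  apply: (right_quot_le ba (fd a)) => h /andP[h0 hb].
  set t := h / (b - a).
  have t01 : 0 <= t <= 1.
    apply/andP; split; first by rewrite /t divr_ge0 // ltW.
    by rewrite /t ler_pdivrMr // mul1r ltW.
  have E : h + a = t * b + (1 - t) * a by rewrite /t; field; rewrite gt_eqF.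
  have Cv := cvx b a t t01.
  have E2 : q * h = t * (f b - f a) by rewrite /q /t; field; rewrite gt_eqF.
  rewrite mulrC ler_pdivrMr // E2 E; lra.
apply: (left_quot_ge ba (fd b)) => h /andP[hb h0].
set t := - h / (b - a).
have t01 : 0 <= t <= 1.
  apply/andP; split; first by rewrite /t divr_ge0 // ?oppr_ge0 ltW // -oppr_ge0 ?opprK ltW.
  by rewrite /t ler_pdivrMr // mul1r ltW // -ltrNl.
have E : h + b = t * a + (1 - t) * b by rewrite /t; field; rewrite gt_eqF.
have Cv := cvx a b t t01.
have E2 : q * h = - t * (f b - f a) by rewrite /q /t; field; rewrite gt_eqF.
rewrite mulrC ler_ndivlMr // E2 E; lra.
Qed.

Arguments conv_mono [f df].

Lemma conv_d2_ge0 (f df d2f : R -> R) :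
  (forall a b t, 0 <= t <= 1 -> f (t * a + (1 - t) * b) <= t * f a + (1 - t) * f b) ->
  (forall s : R, is_derive s 1 f (df s)) ->
  (forall s : R, is_derive s 1 df (d2f s)) ->
  forall s, 0 <= d2f s.
Proof.
move=> cvx fd f2d s.
apply: (right_quot_ge ltr01 (f2d s)) => h /andP[h0 _].
apply: mulr_ge0; first by rewrite invr_ge0 ltW.
rewrite subr_ge0; apply: (conv_mono cvx fd); by rewrite ltrDr.
Qed.

Lemma mvt_rem (f df : R -> R) (gam s dl : R) :
  (forall x : R, is_derive x 1 f (df x)) ->
  (forall a b, `|df a - df b| <= gam * `|a - b|) ->
  `|f (s + dl) - f s - df s * dl| <= gam * dl ^+ 2.
Proof.
move=> fd lip.
have g0 : 0 <= gam.
  by have := lip 1 0; rewrite subr0 normr1 mulr1; apply: le_trans.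
have dv : forall z, derivable f z 1 by move=> z; case: (fd z).
have [dpos|dneg|->] := ltgtP dl 0; last first.
- by rewrite addr0 subrr mulr0 subr0 normr0 expr0n /= mulr0.
- have sd : s < s + dl by rewrite ltrDl.
  have [c] := MVT sd (fun x _ => fd x) (derivable_within_continuous (fun z _ => dv z)).
  rewrite in_itv /= => /andP[c1 c2] E.
  have -> : f (s + dl) - f s - df s * dl = (df c - df s) * dl.
    by rewrite E; ring.
  rewrite normrM; apply: (le_trans (ler_wpM2r (normr_ge0 _) (lip _ _))).
  rewrite -mulrA; apply: ler_wpM2l => //.
  rewrite !gtr0_norm ?subr_gt0 //; nra.
- have sd : s + dl < s by rewrite gtrDl.
  have [c] := MVT sd (fun x _ => fd x) (derivable_within_continuous (fun z _ => dv z)).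
  rewrite in_itv /= => /andP[c1 c2] E.
  have -> : f (s + dl) - f s - df s * dl = (df c - df s) * dl.
    have -> : f (s + dl) - f s = - (f s - f (s + dl)) by ring.
    by rewrite E; ring.
  rewrite normrM; apply: (le_trans (ler_wpM2r (normr_ge0 _) (lip _ _))).
  rewrite -mulrA; apply: ler_wpM2l => //.
  rewrite ltr0_norm ?subr_lt0 // ltr0_norm //; nra.
Qed.


Lemma is_derive_affcomp (f df : R -> R) (A B t : R) :
  (forall x : R, is_derive x 1 f (df x)) ->
  is_derive t 1 (fun s => f (A + s * B)) (df (A + t * B) * B).
Proof.
move=> fd.
have gd : forall z : R, is_derive z 1 (fun s : R => A + s * B) B.
  move=> z; apply: is_derive_eq.
  by rewrite add0r mul1r scaler0 add0r /GRing.scale /= mulr1.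
have gdv : forall z : R, derivable (fun s : R => A + s * B) z 1.
  by move=> z; case: (gd z).
have fdv : forall z : R, derivable f z 1 by move=> z; case: (fd z).
have cd : derivable (f \o (fun s : R => A + s * B)) t 1.
  apply/derivable1_diffP; apply: differentiable_comp; apply/derivable1_diffP.
    exact: gdv.
  exact: fdv.
apply: DeriveDef; first exact: cd.
rewrite -derive1E.
have := derive1_comp (gdv t) (fdv (A + t * B)).
rewrite /comp => ->.
by rewrite !derive1E (@derive_val _ _ _ _ _ _ _ (gd t)) (@derive_val _ _ _ _ _ _ _ (fd _)).
Qed.

End An.


Section Min.
Set Implicit Arguments. Unset Strict Implicit.
Variable R : realType.

Lemma grad0_min (Y : Type) n d (ell dl : R -> Y -> R) (lam : R)
  (Z : 'I_n -> 'cV[R]_d) (y : 'I_n -> Y) (w : 'cV[R]_d) :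
  (forall (s : R) (yv : Y), is_derive s 1 (fun u => ell u yv) (dl s yv)) ->
  (forall w', Lobj ell lam Z y w <= Lobj ell lam Z y w') ->
  gradL dl lam Z y w = 0.
Proof.
move=> ld wmin.
set u := gradL dl lam Z y w.
pose A i := vdot w (Z i); pose B i := vdot u (Z i).
pose phi := \sum_(i < n) (fun t : R => ell (A i + t * B i) (y i) +
   lam / 2 * (vdot w w + t * (2 * vdot w u) + t ^+ 2 * vdot u u)).
have phiE : forall t, phi t = Lobj ell lam Z y (w + t *: u).
  move=> t; rewrite /phi fct_sumE /Lobj; apply: eq_bigr => i _.
  rewrite vnorm_sq vdotDl !vdotDr !vdotZl !vdotZr /A /B vdotDl vdotZl.
  rewrite vdotDl vdotZl (vdotC u w); congr (_ + _); ring.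
have pd : forall t : R, is_derive t 1 phi (\sum_(i < n) (dl (A i + t * B i) (y i) * B i +
     lam / 2 * (2 * vdot w u + 2 * t * vdot u u))).
  move=> t; apply: is_derive_sum => i; apply: is_deriveD.
    have := is_derive_affcomp (A i) (B i) t (fun x => ld x (y i)). exact.
  apply: is_derive_eq.
  rewrite !scaler0 !add0r mul1r /GRing.scale /=; ring.
have h0 : is_derive (0 : R) 1 phi 0.
  apply: (@derive1_at_min _ phi (-1) 1 0).
  - by rewrite (le_trans (lerN10 _)) // ler01.
  - by move=> t _; case: (pd t).
  - by rewrite in_itv /= ltrN10 ltr01.
  - by move=> t _; rewrite !phiE scale0r addr0; exact: wmin.
have E1 := @derive_val _ _ _ _ _ _ _ h0.
have E2 := @derive_val _ _ _ _ _ _ _ (pd 0).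
rewrite E2 in E1.
apply: vdot_eq0; rewrite -{}E1 {2}/u /gradL vdot_sumr; apply: eq_bigr => i _.
rewrite vdotDr !vdotZr /B /A mul0r addr0 mulr0 mul0r addr0 (vdotC w u); by field.
Qed.
End Min.


Section GSTn.
Set Implicit Arguments. Unset Strict Implicit.
Variable R : realType.

Lemma sum_tupleS (T : finType) l (F : l.+1.-tuple T -> R) :
  \sum_(t : l.+1.-tuple T) F t = \sum_(j : T) \sum_(t : l.-tuple T) F [tuple of j :: t].
Proof.
rewrite pair_bigA /=.
pose hh := fun p : T * l.-tuple T => [tuple of p.1 :: p.2].
pose hi := fun t : l.+1.-tuple T => (thead t, [tuple of behead t] : l.-tuple T).
rewrite (reindex hh) //=.
exists hi => [[j t] _|t _].
  rewrite /hi /hh /= theadE; congr pair; exact: val_inj.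
by rewrite /hh /hi /= [RHS]tuple_eta.
Qed.

Lemma sum_tuple0 (T : finType) (F : 0.-tuple T -> R) :
  \sum_(t : 0.-tuple T) F t = F [tuple].
Proof. by rewrite (big_pred1 [tuple]) // => t /=; rewrite [t]tuple0; apply/esym/eqP. Qed.

Lemma vdot_abs g (v : 'cV[R]_g) :
  vdot (map_mx (fun a => `|a|) v) (map_mx (fun a => `|a|) v) = vdot v v.
Proof. by apply: eq_bigr => k _; rewrite !mxE -!expr2 real_normK // num_real. Qed.

Lemma tuple_bound J g (h : 'I_J -> R -> R) (S : 'M[R]_g) (B : R) :
  (forall v : 'cV[R]_g, \sum_(j < J) vnorm (wav (h j) S *m v) ^+ 2 <= B ^+ 2 * vnorm v ^+ 2) ->
  forall l (x : 'cV[R]_g),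
  \sum_(t : l.-tuple 'I_J) vdot (gst_Phi h S x t) (gst_Phi h S x t) <= B ^+ (2 * l) * vdot x x.
Proof.
move=> Hf; elim=> [|l IH] x.
  by rewrite sum_tuple0 muln0 expr0 mul1r.
rewrite sum_tupleS.
apply: (@le_trans _ _ (\sum_(j < J) B ^+ (2 * l) *
   vdot (gst_step h S x j) (gst_step h S x j))).
  apply: ler_sum => j _; exact: IH.
rewrite -mulr_sumr mulnS exprD -mulrA mulrCA.
apply: ler_wpM2l; first by rewrite exprM exprn_ge0 // sqr_ge0.
have := Hf x; rewrite vnorm_sq => H; apply: le_trans H.
by apply: ler_sum => j _; rewrite vdot_abs vnorm_sq.
Qed.


Lemma coef_bound J g (h : 'I_J -> R -> R) (S : 'M[R]_g) (x : 'cV[R]_g) (p : seq 'I_J) :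
  (0 < g)%N ->
  gst_coef h S x p ^+ 2 <= vdot (gst_Phi h S x p) (gst_Phi h S x p) / g%:R.
Proof.
move=> g0; set P := gst_Phi h S x p.
pose one := (const_mx 1 : 'cV[R]_g).
have E1 : \sum_(k < g) P k 0 = vdot P one.
  by apply: eq_bigr => k _; rewrite mxE mulr1.
have E2 : vdot one one = g%:R.
  by rewrite /vdot (eq_bigr (fun _ => 1)) ?sumr_const ?card_ord // => k _; rewrite mxE mulr1.
have gp : 0 < (g%:R : R) by rewrite ltr0n.
rewrite /gst_coef -/P E1 exprMn.
have := vdot_CS P one; rewrite E2 => H.
rewrite -(@ler_pM2r _ (g%:R ^+ 2)) ?exprn_gt0 //.
have gn : (g%:R : R) != 0 by rewrite gt_eqF.
have -> : g%:R^-1 ^+ 2 * vdot P one ^+ 2 * g%:R ^+ 2 = vdot P one ^+ 2 by field.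
by have -> : vdot P P / g%:R * g%:R ^+ 2 = vdot P P * g%:R by field.
Qed.

Lemma gst_norm (L J g : nat) (h : 'I_J -> R -> R) (S : 'M[R]_g) (x : 'cV[R]_g) (B : R) :
  (0 < g)%N ->
  (forall v : 'cV[R]_g, \sum_(j < J) vnorm (wav (h j) S *m v) ^+ 2 <= B ^+ 2 * vnorm v ^+ 2) ->
  (forall k, `|x k 0| <= 1) ->
  vdot (gst L h S x) (gst L h S x) <= \sum_(l < L) B ^+ (2 * l).
Proof.
move=> g0 Hf Hx.
have gp : 0 < (g%:R : R) by rewrite ltr0n.
have xx : vdot x x <= g%:R.
  rewrite /vdot -[g in g%:R]card_ord -sumr_const; apply: ler_sum => k _.
  by rewrite -expr2 -real_normK ?num_real // expr_le1 // normr_ge0.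
have E : vdot (gst L h S x) (gst L h S x) =
   \sum_(l < L) \sum_(t : l.-tuple 'I_J) gst_coef h S x t ^+ 2.
  have := @sig_big_dep R 0 +%R _ (fun l : 'I_L => (l.-tuple 'I_J : finType)) (fun _ => true) (fun l _ => true)
     (fun (l : 'I_L) (t : l.-tuple 'I_J) => gst_coef h S x t ^+ 2).
  rewrite /= => ->.
  have := @big_enum_val R 0 +%R _ predT
     (fun p : gst_path L J => gst_coef h S x (tagged p) ^+ 2).
  move=> E'; rewrite /vdot (eq_bigr (fun k => gst_coef h S x (tagged (@enum_val (gst_path L J) predT k)) ^+ 2)).
    by rewrite -[RHS]/(\big[+%R/0]_(x0 in (predT : pred (gst_path L J))) gst_coef h S x (tagged x0) ^+ 2) E'.
  by move=> k _; rewrite mxE expr2.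
rewrite E; apply: ler_sum => l _.
apply: (@le_trans _ _ (\sum_(t : l.-tuple 'I_J)
    vdot (gst_Phi h S x t) (gst_Phi h S x t) / g%:R)).
  by apply: ler_sum => t _; exact: coef_bound.
rewrite -mulr_suml ler_pdivrMr //.
apply: le_trans (tuple_bound Hf l x) _.
apply: ler_wpM2l; first by rewrite exprM exprn_ge0 // sqr_ge0.
exact: xx.
Qed.

End GSTn.


Unset Implicit Arguments. Set Strict Implicit.

Lemma hess_act (R : realType) (Y : Type) n d (d2l : R -> Y -> R) (lam : R)
  (Z : 'I_n -> 'cV[R]_d) (y : 'I_n -> Y) (w v : 'cV[R]_d) :
  hessL d2l lam Z y w *m v =
  \sum_(i < n) ((d2l (vdot w (Z i)) (y i) * vdot (Z i) v) *: Z i + lam *: v).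
Proof.
rewrite /hessL mulmx_suml; apply: eq_bigr => i _.
rewrite mulmxDl mul_scalar_mx -scalemxAl -mulmxA.
have -> : (Z i)^T *m v = (vdot (Z i) v)%:M.
  apply/matrixP => a b; rewrite (ord1 a) (ord1 b) !mxE /= mulr1n.
  by apply: eq_bigr => k _; rewrite mxE.
by rewrite mul_mx_scalar scalerA.
Qed.

Lemma vnormB (R : realType) d (u v : 'cV[R]_d) : vnorm (u - v) <= vnorm u + vnorm v.
Proof.
apply: le_trans (vnormD _ _) _.
by rewrite -scaleN1r vnormZ normrN normr1 mul1r.
Qed.

Theorem corollary4p5
  (R : realType) (Y : Type) (n : nat) (g : 'I_n -> nat)
  (S : forall i : 'I_n, 'M[R]_(g i)) (x : forall i : 'I_n, 'cV[R]_(g i))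
  (y : 'I_n -> Y)
  (L J : nat) (h : 'I_J -> R -> R) (A B : R)
  (ell dl d2l : R -> Y -> R) (lam C1 C2 gam1 gam2 : R)
  (Rm : forall i : 'I_n, {set 'I_(g i)}) (m : nat)
  (wstar : 'cV[R]_(npaths L J)) :
  (0 < L)%N -> (0 < J)%N ->
  (forall i, (S i)^T = S i) ->
  (* frame property of the wavelets, for every shift operator considered *)
  0 < A -> A <= B ->
  (forall i (v : 'cV[R]_(g i)),
      A ^+ 2 * vnorm v ^+ 2 <= \sum_(j < J) vnorm (wav (h j) (S i) *m v) ^+ 2
   /\ \sum_(j < J) vnorm (wav (h j) (S i) *m v) ^+ 2 <= B ^+ 2 * vnorm v ^+ 2) ->
  (forall i (v : 'cV[R]_(g i)),
      A ^+ 2 * vnorm v ^+ 2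
        <= \sum_(j < J) vnorm (wav (h j) (remove_shift (Rm i) (S i)) *m v) ^+ 2
   /\ \sum_(j < J) vnorm (wav (h j) (remove_shift (Rm i) (S i)) *m v) ^+ 2
        <= B ^+ 2 * vnorm v ^+ 2) ->
  (* loss: convex, twice differentiable in s, with derivatives dl, d2l *)
  (forall (yv : Y) (a b t : R), 0 <= t <= 1 ->
      ell (t * a + (1 - t) * b) yv <= t * ell a yv + (1 - t) * ell b yv) ->
  (forall (s : R) (yv : Y), is_derive s 1 (fun u => ell u yv) (dl s yv)) ->
  (forall (s : R) (yv : Y), is_derive s 1 (fun u => dl u yv) (d2l s yv)) ->
  0 < lam ->
  let Z := fun i => gst L h (S i) (x i) in
  let Z' := fun i => gst L h (remove_shift (Rm i) (S i))
                              (remove_signal (Rm i) (x i)) in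
  (* (1) *)
  (forall i (w : 'cV[R]_(npaths L J)),
      vnorm (dl (vdot w (Z i)) (y i) *: Z i) <= C1 /\
      vnorm (dl (vdot w (Z' i)) (y i) *: Z' i) <= C1) ->
  (* (2) *)
  (forall i (w : 'cV[R]_(npaths L J)),
      `|dl (vdot w (Z i)) (y i)| <= C2 /\ `|dl (vdot w (Z' i)) (y i)| <= C2) ->
  (* (3) *)
  (forall i (s t : R), `|dl s (y i) - dl t (y i)| <= gam1 * `|s - t|) ->
  (* (4) *)
  (forall i (s t : R), `|d2l s (y i) - d2l t (y i)| <= gam2 * `|s - t|) ->
  (* (5) *)
  (forall i (k : 'I_(g i)), `|x i k 0| <= 1) ->
  (* m nodes removed in total, m < min_i g_i *)
  m = (\sum_(i < n) #|Rm i|)%N ->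
  (forall i, (m < g i)%N) ->
  (* w* minimizes L(., D) *)
  (forall w, Lobj ell lam Z y wstar <= Lobj ell lam Z y w) ->
  let Hw := hessL d2l lam Z' y wstar in
  let Delta := gradL dl lam Z y wstar - gradL dl lam Z' y wstar in
  let w' := wstar + invmx Hw *m Delta in
  let F := Num.sqrt (\sum_(l < L) B ^+ (2 * l)) in
  vnorm (gradL dl lam Z' y w')
    <= 4 * gam2 * (m%:R) ^+ 2 * C1 ^+ 2 * F ^+ 3 / (lam ^+ 2 * n%:R).
Proof.
move=> L0 J0 Hsym A0 AB Hfr Hfr2 Hcvx Hd1 Hd2 lam0 Z Z2 H1 H2 H3 H4 H5 Hm Hmg Hmin.
cbv zeta.
set Hw := hessL d2l lam Z2 y wstar.
set Delta := gradL dl lam Z y wstar - gradL dl lam Z2 y wstar.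
set v := invmx Hw *m Delta.
set F := Num.sqrt _.
have [n0|npos] := posnP n.
  subst n; rewrite /gradL big_ord0 vnorm0 mulr0 invr0 mulr0.
  exact: lexx.
pose i0 := Ordinal npos.
have gam2p : 0 <= gam2.
  by have := H4 i0 1 0; rewrite subr0 normr1 mulr1; apply: le_trans (normr_ge0 _).
have C1p : 0 <= C1 by case: (H1 i0 0) => + _; apply: le_trans; exact: vnorm_ge0.
have np : 0 < (n%:R : R) by rewrite ltr0n.
have lamn : 0 < lam * n%:R by rewrite mulr_gt0.
have Fp : 0 <= F by exact: sqrtr_ge0.
have d2p : forall s yv, 0 <= d2l s yv.
  move=> s0 yv.
  exact: (@conv_d2_ge0 R (fun u => ell u yv) (fun u => dl u yv) (fun u => d2l u yv)
    (fun a b t ht => Hcvx yv a b t ht) (fun s => Hd1 s yv) (fun s => Hd2 s yv) s0).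
have g0 : gradL dl lam Z y wstar = 0 by exact: grad0_min Hd1 Hmin.
have ZF : forall i, vnorm (Z2 i) <= F.
  move=> i; rewrite /vnorm /F ler_sqrt; last first.
    by apply: sumr_ge0 => l _; rewrite exprM exprn_ge0 // sqr_ge0.
  apply: gst_norm.
  - exact: leq_ltn_trans (leq0n m) (Hmg i).
  - by move=> v0; exact: (proj2 (Hfr2 i v0)).
  - by move=> k; rewrite mxE; case: ifP => _; [rewrite normr0 ler01 | exact: H5].
have quad : forall c, lam * n%:R * vdot c c <= vdot c (Hw *m c).
  move=> c; rewrite hess_act vdot_sumr.
  have -> : lam * n%:R * vdot c c = \sum_(i < n) lam * vdot c c.
    by rewrite sumr_const card_ord -mulr_natr; ring.
  apply: ler_sum => i _; rewrite vdotDr !vdotZr lerDr (vdotC c (Z2 i)).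
  by rewrite -mulrA mulr_ge0 // -expr2 sqr_ge0.
have Hunit : Hw \in unitmx.
  rewrite unitmxE unitfE; apply/negP => /det0P [r rn0 r0].
  have cz : r^T = 0.
    apply: vdot_eq0; apply/eqP; rewrite eq_le vdot_ge0 andbT.
    have := quad r^T.
    have -> : vdot r^T (Hw *m r^T) = (r *m Hw *m r^T) 0 0.
      rewrite -mulmxA [RHS]mxE; apply: eq_bigr => k _; rewrite mxE.
      done.
    rewrite r0 mul0mx mxE => H.
    by rewrite -(pmulr_rle0 _ lamn).
  by move: rn0; rewrite -[r]trmxK cz trmx0 eqxx.
have Hv : Hw *m v = Delta by rewrite /v mulmxA mulmxV // mul1mx.
have Dnorm : vnorm Delta <= 2 * C1 * m%:R.
  rewrite /Delta /gradL -sumrB.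
  apply: le_trans (vnorm_sum _) _.
  rewrite Hm natr_sum mulr_sumr; apply: ler_sum => i _.
  have -> : forall a b c : 'cV[R]_(npaths L J), a + c - (b + c) = a - b.
    by move=> a b c; rewrite opprD addrACA subrr addr0.
  have [E0|NE] := eqVneq (Rm i) finset.set0.
    have -> : Z2 i = Z i.
      rewrite /Z2 /Z; congr gst.
        by apply/matrixP => a b; rewrite mxE E0 !inE.
      by apply/matrixP => a b; rewrite mxE E0 !inE /= (ord1 b).
    by rewrite subrr vnorm0 E0 cards0 mulr0.
  have c1 : (1 <= #|Rm i|)%N by rewrite card_gt0.
  apply: le_trans (vnormB _ _ _ _) _.
  have [a1 b1] := H1 i wstar.
  apply: (@le_trans _ _ (2 * C1 * 1)).
    by rewrite mulr1; lra.
  by apply: ler_wpM2l; [lra | rewrite ler1n].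
have vbound : lam * n%:R * vnorm v <= vnorm Delta.
  have Hq := quad v; rewrite Hv in Hq.
  have Hc := vdot_le v Delta.
  rewrite -vnorm_sq expr2 in Hq.
  have [v0|vp] := eqVneq (vnorm v) 0.
    by rewrite v0 mulr0 vnorm_ge0.
  have vpos : 0 < vnorm v by rewrite lt_def vp vnorm_ge0.
  rewrite -(ler_pM2r vpos); lra.
have vb2 : vnorm v <= 2 * C1 * m%:R / (lam * n%:R).
  by rewrite ler_pdivlMr // mulrC; exact: le_trans vbound Dnorm.
pose r i := dl (vdot (wstar + v) (Z2 i)) (y i) - dl (vdot wstar (Z2 i)) (y i)
   - d2l (vdot wstar (Z2 i)) (y i) * vdot (Z2 i) v.
have GE : gradL dl lam Z2 y (wstar + v) = \sum_(i < n) r i *: Z2 i.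
  have E0 : gradL dl lam Z2 y wstar + Hw *m v = 0.
    by rewrite Hv /Delta addrC subrK g0.
  rewrite -[LHS]subr0 -[in LHS]E0 hess_act /gradL.
  rewrite -[X in _ - X]big_split /= -sumrB; apply: eq_bigr => i _; rewrite /r.
  by apply/matrixP => a b; rewrite !mxE; ring.
rewrite GE; apply: le_trans (vnorm_sum _) _.
apply: (@le_trans _ _ (\sum_(i < n) gam2 * F ^+ 3 * vnorm v ^+ 2)).
  apply: ler_sum => i _; rewrite vnormZ.
  have Hr : `|r i| <= gam2 * vdot (Z2 i) v ^+ 2.
    have := @mvt_rem R (fun u => dl u (y i)) (fun u => d2l u (y i)) gam2
      (vdot wstar (Z2 i)) (vdot (Z2 i) v) (fun x => Hd2 x (y i)) (H4 i).
    by rewrite /r vdotDl (vdotC v (Z2 i)).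
  apply: le_trans (ler_wpM2r (vnorm_ge0 _) Hr) _.
  have d2 : vdot (Z2 i) v ^+ 2 <= F ^+ 2 * vnorm v ^+ 2.
    apply: le_trans (vdot_CS _ _) _.
    rewrite -!vnorm_sq; apply: ler_wpM2r; first exact: sqr_ge0.
    have := ZF i; have := vnorm_ge0 (Z2 i); nra.
  rewrite -mulrA (_ : F ^+ 3 * vnorm v ^+ 2 = (F ^+ 2 * vnorm v ^+ 2) * F); last by ring.
  rewrite -[leLHS]mulrA; apply: ler_wpM2l => //; apply: ler_pM => //; [exact: sqr_ge0 | exact: vnorm_ge0].
rewrite sumr_const card_ord -[leLHS]mulr_natr.
have vb3 : vnorm v ^+ 2 <= (2 * C1 * m%:R / (lam * n%:R)) ^+ 2.
  by rewrite !expr2; apply: ler_pM => //; exact: vnorm_ge0.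
apply: (@le_trans _ _ (gam2 * F ^+ 3 * (2 * C1 * m%:R / (lam * n%:R)) ^+ 2 * n%:R)).
  apply: ler_wpM2r; first exact: ltW.
  by apply: ler_wpM2l => //; rewrite mulr_ge0 // exprn_ge0.
have lam0' : lam != 0 by rewrite gt_eqF.
have n0' : (n%:R : R) != 0 by rewrite gt_eqF.
rewrite le_eqVlt; apply/orP; left; apply/eqP; field.
by rewrite lam0' n0'.
Qed.
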